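(* Let $\alpha\in(1,\infty)$, let $p_{Y\mid X}$ be a channel between finite sets $\mathcal X,\mathcal Y$, and for a distribution $p_X$ on $\mathcal X$, a joint distribution $\tilde q_{X,Y}$ on $\mathcal X\times\mathcal Y$ with $X$-marginal $\tilde q_X$, and a reverse channel $r_{X\mid Y}$, define $$\tilde F_\alpha^{\mathrm{S3}}(p_X,\tilde q_{X,Y},r_{X\mid Y}):=\frac{\alpha}{1-\alpha}D(\tilde q_{X,Y}\|\tilde q_Xp_{Y\mid X})+\mathbb E^{\tilde q_{X,Y}}\!\left[\log\frac{r_{X\mid Y}(X\mid Y)}{\tilde q_X(X)}\right]+\frac{1}{1-\alpha}D(\tilde q_X\|p_X).$$ Then: (1) for fixed $(p_X,\tilde q_{X,Y})$, $\tilde F_\alpha^{\mathrm{S3}}$ is maximized over $r_{X\mid Y}$ by $r^*_{X\mid Y}(x\mid y)=\tilde q_{X,Y}(x,y)/\sum_{x'}\tilde q_{X,Y}(x',y)$; (2) for fixed $(\tilde q_{X,Y},r_{X\mid Y})$, it is maximized over $p_X$ by $p_X^*(x)=\sum_y\tilde q_{X,Y}(x,y)$; (3) for fixed $(p_X,r_{X\mid Y})$, it is maximized over $\tilde q_{X,Y}$ by $$\tilde q^*_{X,Y}(x,y)=\frac{p_X(x)^{1/\alpha}p_{Y\mid X}(y\mid x)r_{X\mid Y}(x\mid y)^{1-1/\alpha}}{\sum_{x',y'}p_X(x')^{1/\alpha}p_{Y\mid X}(y'\mid x')r_{X\mid Y}(x'\mid y')^{1-1/\alpha}}.$$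
   Context: $\log$ is natural and $D$ is the Kullback–Leibler divergence. A reverse channel $r_{X\mid Y}$ is a family $\{r_{X\mid Y}(\cdot\mid y)\}_{y\in\mathcal Y}$ of distributions on $\mathcal X$. *)

(* Defs.v *)
From HB Require Import structures.
From mathcomp Require Import all_boot all_order all_algebra.
From mathcomp Require Import all_classical all_reals.
From mathcomp Require Import ereal exp.
Set Implicit Arguments. Unset Strict Implicit. Unset Printing Implicit Defensive.
Import Order.TTheory GRing.Theory Num.Theory.
Local Open Scope ring_scope.
Local Open Scope ereal_scope.

Section Defs.
Variables (R : realType) (X Y : finType).

Definition is_dist (T : finType) (p : T -> R) : Prop :=
  (forall t, (0 <= p t)%R) /\ (\sum_(t : T) p t = 1)%R.

Definition is_channel (W : X -> Y -> R) : Prop := forall x, is_dist (W x).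

(* a reverse channel r_{X|Y}: r y x = r_{X|Y}(x|y) *)
Definition is_rev_channel (r : Y -> X -> R) : Prop := forall y, is_dist (r y).

Definition margX (q : X * Y -> R) (x : X) : R := (\sum_(y : Y) q (x, y))%R.
Definition margY (q : X * Y -> R) (y : Y) : R := (\sum_(x : X) q (x, y))%R.

(* a * log (a / b) with conventions 0 log(0/b) = 0, a log(a/0) = +oo (a>0) *)
Definition klterm (a b : R) : \bar R :=
  if a == 0%R then 0 else if b == 0%R then +oo else (a * ln (a / b))%:E.

Definition KL (T : finType) (q p : T -> R) : \bar R := \sum_(t : T) klterm (q t) (p t).

(* a * log (b / c) with conventions 0 log(..) = 0, a log(0/c) = -oo (a>0) *)
Definition eterm (a b c : R) : \bar R :=
  if a == 0%R then 0 else if b == 0%R then -oo else (a * ln (b / c))%:E.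

Definition Elog (q : X * Y -> R) (r : Y -> X -> R) : \bar R :=
  \sum_(xy : X * Y) eterm (q xy) (r xy.2 xy.1) (margX q xy.1).

Definition FS3 (alpha : R) (W : X -> Y -> R) (p : X -> R) (q : X * Y -> R)
    (r : Y -> X -> R) : \bar R :=
  (alpha / (1 - alpha))%:E * KL q (fun xy => margX q xy.1 * W xy.1 xy.2)%R
  + Elog q r
  + (1 / (1 - alpha))%:E * KL (margX q) p.

Definition qtilde (alpha : R) (W : X -> Y -> R) (p : X -> R) (r : Y -> X -> R)
    (xy : X * Y) : R :=
  (p xy.1 `^ (1 / alpha) * W xy.1 xy.2 * r xy.2 xy.1 `^ (1 - 1 / alpha))%R.

End Defs.

(* Main.v *)
Require Import Defs.
From HB Require Import structures.
From mathcomp Require Import all_boot all_order all_algebra.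
From mathcomp Require Import all_classical all_reals.
From mathcomp Require Import ereal exp ring lra.
Import Order.TTheory GRing.Theory Num.Theory.
Set Implicit Arguments. Unset Strict Implicit. Unset Printing Implicit Defensive.
Local Open Scope ring_scope.
Local Open Scope ereal_scope.

Section Aux.
Variables (R : realType) (X Y : finType).

Lemma gibbs (a b : R) : (0 < a)%R -> (0 < b)%R -> (a * (ln b - ln a) <= b - a)%R.
Proof.
move=> ha hb.
have h : (-1 < b / a - 1)%R.
  have : (0 < b / a)%R by apply: divr_gt0.
  lra.
have := le_ln1Dx h.
rewrite addrC subrK => hl.
have := ler_wpM2l (ltW ha) hl.
rewrite -ln_div // mulrBr mulr1 mulrCA divff ?mulr1 // gt_eqF //.
Qed.

Lemma sum_pair (f : X * Y -> R) :
  (\sum_(xy : X * Y) f xy = \sum_(x : X) \sum_(y : Y) f (x, y))%R.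
Proof. by rewrite pair_bigA; apply: eq_bigr => -[]. Qed.

Lemma sum_ge_term (T : finType) (f : T -> R) (t : T) :
  (forall t, 0 <= f t)%R -> (f t <= \sum_(s : T) f s)%R.
Proof.
move=> h; rewrite (bigD1 t) //=.
have : (0 <= \sum_(s | s != t) f s)%R by apply: sumr_ge0.
lra.
Qed.

Lemma sum_neq0_ex (T : finType) (f : T -> R) :
  (forall t, 0 <= f t)%R -> (\sum_(s : T) f s != 0)%R -> exists t, (0 < f t)%R.
Proof.
move=> h hn; case: (pselect (exists t, (0 < f t)%R)) => // H.
exfalso; move/negP: hn; apply; apply/eqP; apply: big1 => t _.
apply/eqP; rewrite eq_le h andbT leNgt; apply/negP => ht; apply: H; by exists t.
Qed.

End Aux.

Lemma alg1 (R : realType) (al q lq lx lw lr lp : R) : (al != 0)%R -> (1 - al != 0)%R ->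
  (al / (1 - al) * (q * (lq - (lx + lw))) + q * (lr - lx) + 1 / (1 - al) * (q * (lx - lp))
  = al / (1 - al) * (q * (lq - (1 / al * lp + lw + (1 - 1 / al) * lr))))%R.
Proof. by move=> h1 h2; field; rewrite h1 h2. Qed.

Section Main.
Variables (R : realType) (X Y : finType) (alpha : R) (W : X -> Y -> R).
Hypothesis ha : (1 < alpha)%R.
Hypothesis hW : forall x y, (0 <= W x y)%R.

Definition Lf (p : X -> R) (r : Y -> X -> R) (xy : X * Y) : R :=
  (1 / alpha * ln (p xy.1) + ln (W xy.1 xy.2) + (1 - 1 / alpha) * ln (r xy.2 xy.1))%R.
Definition good (p : X -> R) (q : X * Y -> R) (r : Y -> X -> R) :=
  forall xy, (0 < q xy)%R -> [/\ 0 < p xy.1, 0 < W xy.1 xy.2 & 0 < r xy.2 xy.1]%R.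
Definition Sf (p : X -> R) (q : X * Y -> R) (r : Y -> X -> R) := (\sum_(xy : X * Y) q xy * (ln (q xy) - Lf p r xy))%R.

Lemma margX_pos (q : X * Y -> R) : (forall xy, 0 <= q xy)%R ->
  forall xy, (0 < q xy)%R -> (0 < margX q xy.1)%R.
Proof.
move=> hq [x y] /= h; apply: lt_le_trans h _.
by have := @sum_ge_term R Y (fun y => q (x,y)) y (fun t => hq (x,t)); rewrite /margX.
Qed.

Lemma c1_neg : (alpha / (1 - alpha) < 0)%R.
Proof. rewrite pmulr_rlt0 ?invr_lt0 ?subr_lt0 //; exact: lt_trans ltr01 ha. Qed.
Lemma c2_neg : (1 / (1 - alpha) < 0)%R.
Proof. rewrite pmulr_rlt0 ?invr_lt0 ?subr_lt0 //; exact: lt_trans ltr01 ha. Qed.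

Lemma FS3_good (p : X -> R) (q : X * Y -> R) (r : Y -> X -> R) : (forall xy, 0 <= q xy)%R -> good p q r ->
  FS3 alpha W p q r = ((alpha / (1 - alpha)) * Sf p q r)%:E.
Proof.
move=> hq hg.
have hqX := margX_pos hq.
have e1 : KL q (fun xy => margX q xy.1 * W xy.1 xy.2)%R =
   (\sum_(xy : X * Y) q xy * ln (q xy / (margX q xy.1 * W xy.1 xy.2)))%:E.
  rewrite /KL -sumEFin; apply: eq_bigr => xy _; rewrite /klterm.
  case: (eqVneq (q xy) 0%R) => [->|hne]; first by rewrite mul0r.
  have hp : (0 < q xy)%R by rewrite lt0r hne hq.
  have [_ hw _] := hg xy hp.
  by rewrite gt_eqF ?mulr_gt0 ?hqX.
have e2 : Elog q r =
   (\sum_(xy : X * Y) q xy * ln (r xy.2 xy.1 / margX q xy.1))%:E.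
  rewrite /Elog -sumEFin; apply: eq_bigr => xy _; rewrite /eterm.
  case: (eqVneq (q xy) 0%R) => [->|hne]; first by rewrite mul0r.
  have hp : (0 < q xy)%R by rewrite lt0r hne hq.
  have [_ _ hr] := hg xy hp.
  by rewrite gt_eqF.
have e3 : KL (margX q) p = (\sum_(x : X) margX q x * ln (margX q x / p x))%:E.
  rewrite /KL -sumEFin; apply: eq_bigr => x _; rewrite /klterm.
  case: (eqVneq (margX q x) 0%R) => [->|hne]; first by rewrite mul0r.
  have [y hy] := sum_neq0_ex (fun t => hq (x,t)) hne.
  have [hpx _ _] := hg (x,y) hy.
  by rewrite gt_eqF.
rewrite /FS3 e1 e2 e3 -!EFinM -!EFinD; congr EFin.
have -> : (\sum_(x : X) margX q x * ln (margX q x / p x) =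
     \sum_(xy : X * Y) q xy * ln (margX q xy.1 / p xy.1))%R.
  by rewrite sum_pair; apply: eq_bigr => x _; rewrite {1}/margX mulr_suml.
rewrite /Sf !mulr_sumr -!big_split /=; apply: eq_bigr => xy _.
case: (eqVneq (q xy) 0%R) => [->|hne]; first by rewrite !(mul0r, mulr0, addr0).
have hp : (0 < q xy)%R by rewrite lt0r hne hq.
have [hpx hw hr] := hg xy hp.
have hx := hqX xy hp.
rewrite !ln_div ?posrE ?mulr_gt0 // lnM ?posrE // /Lf.
have h1 : alpha != 0%R by rewrite gt_eqF // (lt_trans ltr01 ha).
have h2 : (1 - alpha)%R != 0%R by rewrite lt_eqF // subr_lt0.
exact: alg1.
Qed.

Lemma klterm_Nny (a b : R) : klterm a b != -oo.
Proof. by rewrite /klterm; case: ifP => //; case: ifP. Qed.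

Lemma FS3_bad (p : X -> R) (q : X * Y -> R) (r : Y -> X -> R) :
  (forall x, 0 <= p x)%R -> (forall y x, 0 <= r y x)%R ->
  (forall xy, 0 <= q xy)%R -> ~ good p q r -> FS3 alpha W p q r = -oo.
Proof.
move=> hp hr hq hng.
have [xy [hq0 hbad]] : exists xy, (0 < q xy)%R /\
    ~ [/\ 0 < p xy.1, 0 < W xy.1 xy.2 & 0 < r xy.2 xy.1]%R.
  apply: contrapT => H; apply: hng => xy hxy; apply: contrapT => Hn; apply: H.
  by exists xy.
have hqX := margX_pos hq.
rewrite /FS3.
case: (ltP 0%R (p xy.1)) => hpx; last first.
  have p0 : p xy.1 = 0%R by apply/eqP; rewrite eq_le hpx hp.
  have -> : KL (margX q) p = +oo.
    apply/eqP; rewrite esum_eqy; last by move=> x _; exact: klterm_Nny.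
    by apply/existsP; exists xy.1; rewrite /klterm /= (gt_eqF (hqX xy hq0)) p0 eqxx.
  by rewrite lt0_muley ?lte_fin ?c2_neg // addeNy.
case: (ltP 0%R (W xy.1 xy.2)) => hwx; last first.
  have w0 : W xy.1 xy.2 = 0%R by apply/eqP; rewrite eq_le hwx hW.
  have -> : KL q (fun xy => margX q xy.1 * W xy.1 xy.2)%R = +oo.
    apply/eqP; rewrite esum_eqy; last by move=> x _; exact: klterm_Nny.
    by apply/existsP; exists xy; rewrite /klterm /= (gt_eqF hq0) w0 mulr0 eqxx.
  by rewrite lt0_muley ?lte_fin ?c1_neg // !addNye.
case: (ltP 0%R (r xy.2 xy.1)) => hrx; last first.
  have r0 : r xy.2 xy.1 = 0%R by apply/eqP; rewrite eq_le hrx hr.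
  have -> : Elog q r = -oo.
    by rewrite /Elog (bigD1 xy) //= /eterm gt_eqF // r0 eqxx.
  by rewrite addeNy addNye.
by exfalso; apply: hbad.
Qed.

Lemma alpha_gt0 : (0 < alpha)%R. Proof. exact: lt_trans ltr01 ha. Qed.
Lemma ia_neq0 : (1 / alpha != 0)%R.
Proof. by rewrite mul1r invr_eq0 gt_eqF // alpha_gt0. Qed.
Lemma cb_gt0 : (0 < 1 - 1 / alpha)%R.
Proof. by rewrite subr_gt0 mul1r invf_lt1 // alpha_gt0. Qed.

Lemma margY_pos (q : X * Y -> R) : (forall xy, 0 <= q xy)%R ->
  forall xy, (0 < q xy)%R -> (0 < margY q xy.2)%R.
Proof.
move=> hq [x y] /= h; apply: lt_le_trans h _.
by have := @sum_ge_term R X (fun x => q (x,y)) x (fun t => hq (t,y)); rewrite /margY.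
Qed.

Lemma part1 (p : X -> R) (q : X * Y -> R) (rstar r : Y -> X -> R) :
  is_dist p -> is_dist q -> is_rev_channel rstar ->
  (forall x y, (0 < margY q y)%R -> rstar y x = (q (x, y) / margY q y)%R) ->
  is_rev_channel r -> FS3 alpha W p q r <= FS3 alpha W p q rstar.
Proof.
move=> [hp _] [hq hq1] hrs hrsE hr.
have hr0 : forall y x, (0 <= r y x)%R := fun y x => (hr y).1 x.
case: (pselect (good p q r)) => hg; last by rewrite (FS3_bad hp hr0 hq hg) leNye.
have hqY := margY_pos hq.
have hg' : good p q rstar.
  move=> [x y] hxy; have [a b c] := hg (x, y) hxy; split => //=.
  by rewrite (hrsE _ _ (hqY (x, y) hxy)) divr_gt0 // (hqY (x, y) hxy).
rewrite FS3_good // FS3_good // lee_fin; apply: ler_wnM2l; first exact: ltW c1_neg.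
rewrite -subr_le0 /Sf -sumrB.
have : (\sum_(xy : X * Y) (q xy * (ln (q xy) - Lf p rstar xy) - q xy * (ln (q xy) - Lf p r xy))
   <= \sum_(xy : X * Y) ((1 - 1 / alpha) * (margY q xy.2 * r xy.2 xy.1 - q xy)))%R.
  apply: ler_sum => -[x y] _ /=.
  have -> : (q (x, y) * (ln (q (x, y)) - Lf p rstar (x, y)) -
     q (x, y) * (ln (q (x, y)) - Lf p r (x, y)) =
     (1 - 1 / alpha) * (q (x, y) * (ln (r y x) - ln (rstar y x))))%R.
    by rewrite /Lf /=; ring.
  apply: ler_wpM2l; first exact: ltW cb_gt0.
  case: (eqVneq (q (x, y)) 0%R) => [->|hne].
    by rewrite mul0r subr0 mulr_ge0 // sumr_ge0 // => i _; apply: hq.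
  have hxy : (0 < q (x, y))%R by rewrite lt0r hne hq.
  have hy := hqY (x, y) hxy.
  have [_ _ hrp] := hg (x, y) hxy.
  have g := gibbs hxy (mulr_gt0 hy hrp).
  rewrite lnM ?posrE // in g.
  rewrite (hrsE x y hy) ln_div ?posrE //=.
  have -> : (q (x, y) * (ln (r y x) - (ln (q (x, y)) - ln (margY q y))) =
     q (x, y) * (ln (margY q y) + ln (r y x) - ln (q (x, y))))%R by ring.
  exact: g.
move=> h; apply: le_trans h _.
have e1 : (\sum_(xy : X * Y) margY q xy.2 * r xy.2 xy.1 = 1)%R.
  rewrite sum_pair exchange_big /=.
  under eq_bigr => y _ do rewrite -mulr_sumr (hr y).2 mulr1.
  rewrite /margY exchange_big /= -hq1 sum_pair //.
by rewrite -mulr_sumr sumrB e1 hq1 subrr mulr0.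
Qed.

Lemma margX_ge0 (q : X * Y -> R) : (forall xy, 0 <= q xy)%R -> forall x, (0 <= margX q x)%R.
Proof. by move=> hq x; apply: sumr_ge0 => y _; apply: hq. Qed.

Lemma sum_margX (q : X * Y -> R) : (\sum_(x : X) margX q x = \sum_(xy : X * Y) q xy)%R.
Proof. by rewrite sum_pair. Qed.

Lemma part2 (q : X * Y -> R) (r : Y -> X -> R) (p : X -> R) :
  is_dist q -> is_rev_channel r -> is_dist p ->
  FS3 alpha W p q r <= FS3 alpha W (margX q) q r.
Proof.
move=> [hq hq1] hr [hp hp1].
have hr0 : forall y x, (0 <= r y x)%R := fun y x => (hr y).1 x.
case: (pselect (good p q r)) => hg; last by rewrite (FS3_bad hp hr0 hq hg) leNye.
have hqX := margX_pos hq.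
have hg' : good (margX q) q r.
  by move=> xy hxy; have [a b c] := hg xy hxy; split => //; apply: hqX.
rewrite FS3_good // FS3_good // lee_fin; apply: ler_wnM2l; first exact: ltW c1_neg.
rewrite -subr_le0 /Sf -sumrB.
have -> : (\sum_(xy : X * Y) (q xy * (ln (q xy) - Lf (margX q) r xy) - q xy * (ln (q xy) - Lf p r xy))
   = 1 / alpha * \sum_(x : X) margX q x * (ln (p x) - ln (margX q x)))%R.
  rewrite mulr_sumr sum_pair; apply: eq_bigr => x _.
  rewrite {1 3}/margX mulr_suml mulr_sumr; apply: eq_bigr => y _.
  by rewrite /Lf /=; ring.
apply: mulr_ge0_le0; first by rewrite mul1r invr_ge0 ltW // alpha_gt0.
have : (\sum_(x : X) margX q x * (ln (p x) - ln (margX q x)) <= \sum_(x : X) (p x - margX q x))%R.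
  apply: ler_sum => x _.
  case: (eqVneq (margX q x) 0%R) => [->|hne]; first by rewrite mul0r subr0 hp.
  have [y hy] := sum_neq0_ex (fun t => hq (x,t)) hne.
  have [hpx _ _] := hg (x,y) hy.
  have hx : (0 < margX q x)%R by rewrite lt0r hne margX_ge0.
  exact: gibbs.
move=> h; apply: le_trans h _.
by rewrite sumrB hp1 sum_margX hq1 subrr.
Qed.

Lemma qt_ge0 (p : X -> R) (r : Y -> X -> R) xy : (0 <= qtilde alpha W p r xy)%R.
Proof. by rewrite /qtilde !mulr_ge0 ?powR_ge0 ?hW. Qed.

Lemma ln_qt (p : X -> R) (r : Y -> X -> R) xy :
  (0 < p xy.1)%R -> (0 < W xy.1 xy.2)%R -> (0 < r xy.2 xy.1)%R ->
  (0 < qtilde alpha W p r xy)%R /\ ln (qtilde alpha W p r xy) = Lf p r xy.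
Proof.
move=> h1 h2 h3; split; first by rewrite /qtilde !mulr_gt0 ?powR_gt0.
by rewrite /qtilde !lnM ?posrE ?mulr_gt0 ?powR_gt0 // !ln_powR.
Qed.

Lemma qt_pos (p : X -> R) (r : Y -> X -> R) xy :
  (forall x, 0 <= p x)%R -> (forall y x, 0 <= r y x)%R ->
  (0 < qtilde alpha W p r xy)%R ->
  [/\ 0 < p xy.1, 0 < W xy.1 xy.2 & 0 < r xy.2 xy.1]%R.
Proof.
move=> hp hr hq.
have cb : (1 - 1 / alpha != 0)%R by rewrite gt_eqF // cb_gt0.
split; rewrite lt0r ?hp ?hW ?hr andbT; apply/eqP => h0; move: hq; rewrite /qtilde h0.
- by rewrite powR0 ?ia_neq0 // !mul0r ltxx.
- by rewrite mulr0 mul0r ltxx.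
- by rewrite powR0 // mulr0 ltxx.
Qed.

Lemma part3 (p : X -> R) (r : Y -> X -> R) (q : X * Y -> R) :
  is_dist p -> is_rev_channel r ->
  (0 < \sum_(xy : X * Y) qtilde alpha W p r xy)%R -> is_dist q ->
  FS3 alpha W p q r <=
  FS3 alpha W p
    (fun xy => qtilde alpha W p r xy / \sum_(xy' : X * Y) qtilde alpha W p r xy')%R r.
Proof.
move=> [hp _] hr hZ [hq hq1].
have hr0 : forall y x, (0 <= r y x)%R := fun y x => (hr y).1 x.
case: (pselect (good p q r)) => hg; last by rewrite (FS3_bad hp hr0 hq hg) leNye.
set Z := (\sum_(xy : X * Y) qtilde alpha W p r xy)%R.
set qs := (fun xy => qtilde alpha W p r xy / Z)%R.
have hqs0 : forall xy, (0 <= qs xy)%R by move=> xy; rewrite divr_ge0 ?qt_ge0 // ltW.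
have hqsp : forall xy, (0 < qs xy)%R -> (0 < qtilde alpha W p r xy)%R.
  move=> xy h; rewrite lt0r qt_ge0 andbT; apply/eqP => h0.
  by move: h; rewrite /qs h0 mul0r ltxx.
have hg' : good p qs r by move=> xy /hqsp /qt_pos; apply.
have hZ0 : (Z != 0)%R by rewrite gt_eqF.
have hqs1 : (\sum_(xy : X * Y) qs xy = 1)%R by rewrite /qs -mulr_suml divff.
rewrite FS3_good // FS3_good // lee_fin; apply: ler_wnM2l; first exact: ltW c1_neg.
have -> : Sf p qs r = (- ln Z)%R.
  rewrite /Sf; transitivity (\sum_(xy : X * Y) qs xy * (- ln Z))%R; last first.
    by rewrite -mulr_suml hqs1 mul1r.
  apply: eq_bigr => xy _.
  case: (eqVneq (qs xy) 0%R) => [->|hne]; first by rewrite !mul0r.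
  have hxy : (0 < qs xy)%R by rewrite lt0r hne hqs0.
  have [a b c] := hg' xy hxy.
  have [hqt lqt] := ln_qt a b c.
  rewrite /qs ln_div ?posrE // lqt.
  congr (_ * _)%R; ring.
have E : (\sum_(xy : X * Y) q xy * (ln (qs xy) - ln (q xy)) = - Sf p q r - ln Z)%R.
  rewrite /Sf; transitivity (\sum_(xy : X * Y) (- (q xy * (ln (q xy) - Lf p r xy)) - q xy * ln Z))%R;
    last by rewrite sumrB sumrN -mulr_suml hq1 mul1r.
  apply: eq_bigr => xy _.
  case: (eqVneq (q xy) 0%R) => [->|hne]; first by rewrite !(mul0r, oppr0, subr0).
  have hxy : (0 < q xy)%R by rewrite lt0r hne hq.
  have [a b c] := hg xy hxy.
  have [hqt lqt] := ln_qt a b c.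
  rewrite /qs ln_div ?posrE // lqt; ring.
have key : (\sum_(xy : X * Y) q xy * (ln (qs xy) - ln (q xy)) <= 0)%R.
  have : (\sum_(xy : X * Y) q xy * (ln (qs xy) - ln (q xy)) <=
          \sum_(xy : X * Y) (qs xy - q xy))%R.
    apply: ler_sum => xy _.
    case: (eqVneq (q xy) 0%R) => [->|hne]; first by rewrite mul0r subr0 hqs0.
    have hxy : (0 < q xy)%R by rewrite lt0r hne hq.
    have [a b c] := hg xy hxy.
    have [hqt _] := ln_qt a b c.
    by apply: gibbs => //; rewrite /qs divr_gt0.
  by rewrite sumrB hqs1 hq1 subrr.
rewrite E in key.
by rewrite -subr_le0 addrC.
Qed.

End Main.

Theorem proposition5 (R : realType) (X Y : finType) (alpha : R)
  (W : X -> Y -> R) :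
  (1 < alpha)%R -> is_channel W ->
  (* (1) optimal reverse channel *)
  (forall (p : X -> R) (q : X * Y -> R), is_dist p -> is_dist q ->
     forall rstar : Y -> X -> R, is_rev_channel rstar ->
     (forall x y, (0 < margY q y)%R -> rstar y x = (q (x, y) / margY q y)%R) ->
     forall r : Y -> X -> R, is_rev_channel r ->
       FS3 alpha W p q r <= FS3 alpha W p q rstar) /\
  (* (2) optimal input distribution *)
  (forall (q : X * Y -> R) (r : Y -> X -> R), is_dist q -> is_rev_channel r ->
     forall p : X -> R, is_dist p ->
       FS3 alpha W p q r <= FS3 alpha W (margX q) q r) /\
  (* (3) optimal joint distribution *)
  (forall (p : X -> R) (r : Y -> X -> R), is_dist p -> is_rev_channel r ->
     (0 < \sum_(xy : X * Y) qtilde alpha W p r xy)%R ->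
     forall q : X * Y -> R, is_dist q ->
       FS3 alpha W p q r <=
       FS3 alpha W p
         (fun xy => qtilde alpha W p r xy / \sum_(xy' : X * Y) qtilde alpha W p r xy')%R
         r).
Proof.
move=> ha hW.
have hW0 : forall x y, (0 <= W x y)%R := fun x y => (hW x).1 y.
split; [|split].
- move=> p q hp hq rstar hrs hrsE r hr; exact: (part1 ha hW0 hp hq hrs hrsE hr).
- move=> q r hq hr p hp; exact: (part2 ha hW0 hq hr hp).
- move=> p r hp hr hZ q hq; exact: (part3 ha hW0 hp hr hZ hq).
Qed.
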